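(* $\operatorname{Spec}(32_{65})\subseteq\{11,12,13,\dots\}\cup\{\omega\}$.
   Context: $32_{65}$ is the finite integral symmetric relation algebra with atoms $1'$, $a$, $b$, $c$, all symmetric, in which a diversity cycle $xyz$ (with $x,y,z\in\{a,b,c\}$) is mandatory (i.e. $x;y\ge z$) if it involves $a$ and forbidden (i.e. $x;y\cdot z=0$) otherwise. A representation over a set $U$ is an embedding into the full relation algebra $\langle\mathcal P(U\times U),\cup,{}^c,\circ,{}^{-1},\mathrm{Id}_U\rangle$. $\operatorname{Spec}(A)$ is the set of cardinals $\alpha\le\omega$ such that $A$ has a representation over a set of cardinality $\alpha$. *)

(* Defs.v *)
From mathcomp Require Import all_boot.
Set Implicit Arguments. Unset Strict Implicit. Unset Printing Implicit Defensive.

(* Atoms of 32_65, encoded as 'I_4:  0 = 1' (identity), 1 = a, 2 = b, 3 = c. *)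
Definition atom := 'I_4.
Definition is_id (x : atom) : bool := val x == 0.
Definition is_a (x : atom) : bool := val x == 1.

Definition RA := {set atom}.

(* Product of two atoms.  1' is the identity; all atoms are symmetric, so
   x;y >= 1' iff x = y; a diversity cycle xyz is mandatory (z <= x;y)
   iff it involves a, and forbidden otherwise. *)
Definition atom_comp (x y : atom) : RA :=
  if is_id x then [set y]
  else if is_id y then [set x]
  else [set z | if is_id z then x == y else [|| is_a x, is_a y | is_a z]].

Definition ra_join (X Y : RA) : RA := X :|: Y.
Definition ra_compl (X : RA) : RA := ~: X.
Definition ra_comp (X Y : RA) : RA :=
  \bigcup_(x in X) \bigcup_(y in Y) atom_comp x y.
Definition atom_conv (x : atom) : atom := x.
Definition ra_conv (X : RA) : RA := [set atom_conv x | x in X].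
Definition ra_id : RA := [set (@ord0 3)].

Definition frel (U : finType) := {set U * U}.
Definition rel_comp (U : finType) (R S : frel U) : frel U :=
  [set p | [exists z, ((p.1, z) \in R) && ((z, p.2) \in S)]].
Definition rel_conv (U : finType) (R : frel U) : frel U :=
  [set p | (p.2, p.1) \in R].
Definition rel_id (U : finType) : frel U := [set p | p.1 == p.2].

Definition is_representation (U : finType) (h : RA -> frel U) : Prop :=
  injective h /\
  (forall X Y, h (ra_join X Y) = h X :|: h Y) /\
  (forall X, h (ra_compl X) = ~: h X) /\
  (forall X Y, h (ra_comp X Y) = rel_comp (h X) (h Y)) /\
  (forall X, h (ra_conv X) = rel_conv (h X)) /\
  h ra_id = rel_id U.

Definition has_representation_over (U : finType) : Prop :=
  exists h : RA -> frel U, is_representation h.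

(* Main.v *)
Require Import Defs.
From mathcomp Require Import all_boot.
From mathcomp Require Import zify.
Set Implicit Arguments. Unset Strict Implicit. Unset Printing Implicit Defensive.

Definition acomp_nat (x y t : nat) : bool :=
  if x == 0 then t == y else if y == 0 then t == x
  else if t == 0 then x == y else [|| x == 1, y == 1 | t == 1].

Lemma atom_compE (x y t : atom) : (t \in atom_comp x y) = acomp_nat x y t.
Proof.
move: x y t; do 3 case=> [[|[|[|[|?]]]] //= ?]; by rewrite /atom_comp /is_id /is_a /= !inE.
Qed.

Lemma comb (U : finType) (nlab : U -> U -> nat)
  (N0 : forall u v, nlab u v = 0 <-> u = v)
  (N1 : forall u w v, acomp_nat (nlab u w) (nlab w v) (nlab u v))
  (N2 : forall u v s t, s < 4 -> t < 4 -> acomp_nat s t (nlab u v) ->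
        exists w, nlab u w = s /\ nlab w v = t)
  (Ex : exists x y, nlab x y = 2) : 11 <= #|U|.
Proof.
have nuu : forall u, nlab u u = 0 by move=> u; apply/N0.
have sym : forall u v, nlab u v = nlab v u.
  move=> u v; have [->//|uv] := eqVneq u v.
  have h1 : nlab u v <> 0 by move/N0; apply/eqP.
  have h2 : nlab v u <> 0 by move/N0=> E; move: uv; rewrite E eqxx.
  move: (N1 u v u); rewrite nuu /acomp_nat.
  by case: eqP => // _; case: eqP => // _ /eqP.
have tri : forall u v w, 2 <= nlab u v -> 2 <= nlab v w -> nlab u w <= 1.
  move=> u v w; move: (N1 u v w); rewrite /acomp_nat.
  case: (nlab u v) => [|[|a]] //; case: (nlab v w) => [|[|b]] //.
  by case: (nlab u w) => [|[|c]].
have [x [y xy]] := Ex.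
have [z [xz zy]] := N2 x y 1 1 isT isT ltac:(by rewrite xy).
have zx : nlab z x = 1 by rewrite sym.
have yx : nlab y x = 2 by rewrite sym.
have [w1 [zw1 w1x]] := N2 z x 2 2 isT isT ltac:(by rewrite zx).
have [w2 [zw2 w2x]] := N2 z x 2 3 isT isT ltac:(by rewrite zx).
have [w3 [zw3 w3x]] := N2 z x 3 2 isT isT ltac:(by rewrite zx).
have [w4 [zw4 w4x]] := N2 z x 3 3 isT isT ltac:(by rewrite zx).
have [w5 [zw5 w5y]] := N2 z y 2 2 isT isT ltac:(by rewrite zy).
have [w6 [zw6 w6y]] := N2 z y 2 3 isT isT ltac:(by rewrite zy).
have [w7 [zw7 w7y]] := N2 z y 3 2 isT isT ltac:(by rewrite zy).
have [w8 [zw8 w8y]] := N2 z y 3 3 isT isT ltac:(by rewrite zy).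
have w1y : nlab w1 y <= 1 by apply: (tri _ x); rewrite ?w1x ?xy.
have w2y : nlab w2 y <= 1 by apply: (tri _ x); rewrite ?w2x ?xy.
have w3y : nlab w3 y <= 1 by apply: (tri _ x); rewrite ?w3x ?xy.
have w4y : nlab w4 y <= 1 by apply: (tri _ x); rewrite ?w4x ?xy.
have xx := nuu x; have yy := nuu y; have zz := nuu z.
have U1 : uniq [:: z; x; y; w1; w2; w3; w4; w5; w6; w7; w8].
  rewrite /= !inE !negb_or.
  repeat (apply/andP; split); try done; apply/eqP => E; subst; lia.
have := max_card (mem [:: z; x; y; w1; w2; w3; w4; w5; w6; w7; w8]).
by rewrite (card_uniqP U1).
Qed.

Section Rep.
Variables (U : finType) (h : RA -> Defs.frel U).
Hypothesis H : is_representation h.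

Lemma hmono (X Y : RA) : X \subset Y -> h X \subset h Y.
Proof.
case: H => _ [hU _] /setUidPr <-; rewrite hU; exact: subsetUl.
Qed.

Lemma hT : h setT = setT.
Proof.
case: H => _ [hU [hC _]].
by rewrite -(setUCr set0) (hU set0 (~: set0)) -/(ra_compl set0) hC setUCr.
Qed.

Definition o (n : nat) (Hn : n < 4) : atom := Ordinal Hn.

Lemma setT4 : [set: atom] = [set o (isT : 0 < 4)] :|: [set o (isT : 1 < 4)] :|: [set o (isT : 2 < 4)] :|: [set o (isT : 3 < 4)].
Proof.
apply/setP => t; rewrite !inE; case: t => [[|[|[|[|?]]]] ?] //=.
Qed.

Definition lab (u v : U) : atom := odflt ord0 [pick t | (u, v) \in h [set t]].

Lemma lab_in u v : (u, v) \in h [set lab u v].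
Proof.
rewrite /lab; case: pickP => [t //|none].
have := in_setT (u, v); rewrite -hT setT4.
case: H => _ [hU _]; rewrite !(hU).
by rewrite !inE !none.
Qed.

Lemma labE u v (X : RA) : ((u, v) \in h X) = (lab u v \in X).
Proof.
case: (boolP (lab u v \in X)) => L.
  apply: (subsetP (hmono _)) (lab_in u v); by rewrite sub1set.
apply/negbTE; have : (u, v) \in h (~: X).
  apply: (subsetP (hmono _)) (lab_in u v); by rewrite sub1set inE.
case: H => _ [_ [hC _]]; rewrite -/(ra_compl X) hC inE //.
Qed.

Lemma comp1 s t : ra_comp [set s] [set t] = atom_comp s t.
Proof. by rewrite /ra_comp !big_set1. Qed.

Lemma rep_props : 11 <= #|U|.
Proof.
have [hinj [_ [_ [hcomp [_ hid]]]]] := H.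
refine (@comb U (fun u v => val (lab u v)) _ _ _ _).
- move=> u v; have := labE u v ra_id; rewrite hid !inE /= => E.
  split=> e; first by apply/eqP; rewrite E; apply/eqP/val_inj.
  by move: E; rewrite e eqxx => /esym/eqP ->.
- move=> u w v; rewrite -atom_compE -labE -comp1 hcomp inE.
  by apply/existsP; exists w; rewrite /= !labE !inE !eqxx.
- move=> u v s t Hs Ht.
  rewrite -[s]/(val (Ordinal Hs)) -[t]/(val (Ordinal Ht)) -atom_compE -labE -comp1 hcomp inE.
  case/existsP => w; rewrite /= !labE !inE => /andP [/eqP e1 /eqP e2].
  by exists w; rewrite e1 e2.
- have h0 : h set0 = set0.
    by apply/setP => -[u v]; rewrite labE !inE.
  have : h [set o (isT : 2 < 4)] != set0.
    rewrite -h0; apply/eqP => /hinj /setP /(_ (o (isT : 2 < 4))); by rewrite !inE.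
  case/set0Pn => -[x y]; rewrite labE inE => /eqP E.
  by exists x, y; rewrite E.
Qed.
End Rep.

Theorem mainTheorem4 (U : finType) :
  has_representation_over U -> 11 <= #|U|.
Proof. by case=> h H; exact: rep_props H. Qed.
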